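(* Let $\chi=(\chi_u,\ (\chi^k_\alpha)_{k\in\mathbb Z_+,\alpha\in N},\ \chi_{p,0},\ \chi_{p,1})$ be a family of elements of $\mathcal A(\mathbf{CPE})$ with only finitely many nonzero members. Then $\chi$ satisfies the system $$\begin{aligned} &D_1\chi_u+2D_\alpha(u^\alpha_{(1)}\chi_{p,1})=0,\\ &D_1\chi^k_\alpha+\delta^k_0D_\alpha\chi_u+\chi^{k-1}_\alpha+2\big(\delta^k_0D_\alpha(u^\beta_{(\beta)}\chi_{p,1})-\delta^k_1u^1_{(\alpha)}\chi_{p,1}+\delta^k_0D_\beta(u^\beta_{(\alpha)}\chi_{p,1})\big)=0\quad(k\in\mathbb Z_+,\ \alpha\in N,\ \chi^{-1}_\alpha:=0),\\ &D_1\chi_{p,0}-\Delta'\chi_{p,1}=0,\\ &D_1\chi_{p,1}+\chi_{p,0}=0 \end{aligned}$$ if and only if $$\chi^0_\alpha=2u^1_{(\alpha)}\chi_{p,1},\qquad \chi^k_\alpha=0\ (k\ge1),\qquad \chi_{p,0}=-D_1\chi_{p,1}\qquad(\alpha\in N),$$ where $\chi_{p,1}$ and $\chi_u$ satisfy $$\Delta\chi_{p,1}=0,\qquad \big(u^\mu_{(1)}D_\mu D_\alpha-u^\mu_{(\alpha)}D_\mu D_1\big)\chi_{p,1}=0\quad(\alpha\in N),$$ $$D_1\chi_u=-2D_\alpha(u^\alpha_{(1)}\chi_{p,1}),\qquad D_\alpha\chi_u=-2\big(u^\mu_{(\alpha)}D_\mu\chi_{p,1}+D_\alpha(u^\beta_{(\beta)}\chi_{p,1})\big)\quad(\alpha\in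 N).$$
   Context: Fix an integer $m\ge 2$, $M=\{1,\dots,m\}$, $N=\{2,\dots,m\}$. Indices $\lambda,\mu,\nu$ range over $M$, indices $\alpha,\beta$ over $N$; repeated upper/lower indices are summed; $\delta^k_l$ is the Kronecker delta. $\mathbb I=\mathbb Z_+^m$ is the set of multi-indices $\mathrm i=(i^1,\dots,i^m)$; $\mathrm i+(\mu)$ is $\mathrm i$ with its $\mu$-th entry increased by $1$, $(\mu)=0+(\mu)$, $2(\mu)=(\mu)+(\mu)$; $\mathbb I_0=\{\mathrm i: i^1=0\}$, $\mathbb I_1=\{\mathrm i: i^1\in\{0,1\}\}$. The space $\mathbf B$ has coordinates $x^\mu$, $u^\mu_{\mathrm i}$, $p_{\mathrm i}$ ($\mathrm i\in\mathbb I$); $\mathcal A(\mathbf B)$ is the algebra of smooth real functions depending on finitely many coordinates; total derivatives $D_\mu=\partial_{x^\mu}+u^\lambda_{\mathrm i+(\mu)}\partial_{u^\lambda_{\mathrm i}}+p_{\mathrm i+(\mu)}\partial_{p_{\mathrm i}}$ (commuting), $D_{\mathrm i}=D_1^{i^1}\cdots D_m^{i^m}$, $\Delta=\sum_{\mu\in M}D_\mu^2$, $\Delta'=\sum_{\alpha\in N}D_\alpha^2$. Let $CE_{\mathrm i}=u^\mu_{\mathrm i+(\mu)}$ and $PE_{\mathrm i}=\Delta p_{\mathrm i}+D_{\mathrm i}(u^\lambda_{(\mu)}u^\mu_{(\lambda)})$, where $\Delta p_{\mathrm i}=\sum_\mu p_{\mathrm i+2(\mu)}$. Let $\mathcal J\subset\mathcal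 A(\mathbf B)$ be the ideal generated by all $CE_{\mathrm i}$ and $PE_{\mathrm i}$, $\mathrm i\in\mathbb I$ (stable under the $D_\mu$), and $\mathcal A(\mathbf{CPE})=\mathcal A(\mathbf B)/\mathcal J$ with the induced commuting derivations $D_\mu$. Concretely, $\mathcal A(\mathbf{CPE})$ consists of smooth functions of finitely many of the global coordinates $x^\mu$, $u^1_{\mathrm i}$ ($\mathrm i\in\mathbb I_0$), $u^\alpha_{\mathrm i}$ ($\alpha\in N$, $\mathrm i\in\mathbb I$), $p_{\mathrm i}$ ($\mathrm i\in\mathbb I_1$), where the remaining variables are expressed recursively by $u^1_{\mathrm k}=-u^\beta_{\mathrm k-(1)+(\beta)}$ ($k^1\ge1$) and $p_{\mathrm k}=-D_{\mathrm k-2(1)}\Phi$ ($k^1\ge2$), with $\Phi=\Delta'p+u^\lambda_{(\mu)}u^\mu_{(\lambda)}$ in which $u^1_{(1)}$ is replaced by $-u^\alpha_{(\alpha)}$; the derivations $D_\mu$ act by the formula above followed by these substitutions. (In the paper the components $\chi_u,\chi^k_\alpha,\chi_{p,0},\chi_{p,1}$ are denoted $\chi^0_1,\chi^{i^1}_\alpha,\chi^0,\chi^1$, and the system is written $(D_1+\mathrm f^* )\chi=0$.) *)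

(* Defs.v *)
From Stdlib Require Import Reals ClassicalEpsilon.
From Coquelicot Require Import Coquelicot.
From mathcomp Require Import all_boot.

Set Implicit Arguments.
Unset Strict Implicit.
Unset Printing Implicit Defensive.
Local Open Scope R_scope.

Section CPE.
(* m = n.+2, so m >= 2.  The paper's index 1 is ord0; N = {a | a != ord0}. *)
Variable n : nat.
Local Notation m := n.+2.

Definition mi := {ffun 'I_m -> nat}.
Definition mi0 : mi := [ffun _ => 0%N].
Definition addmi (i : mi) (mu : 'I_m) : mi := [ffun j => (i j + (j == mu))%N].
Definition unitmi (mu : 'I_m) : mi := addmi mi0 mu.

(* coordinates of B:  x^mu | u^mu_i | p_i *)
Definition coord : eqType := (('I_m + ('I_m * mi)) + mi)%type.
Definition Xc (mu : 'I_m) : coord := inl (inl mu).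
Definition Uc (la : 'I_m) (i : mi) : coord := inl (inr (la, i)).
Definition Pc (i : mi) : coord := inr i.

Definition pt := coord -> R.
Definition F := pt -> R.

Definition upd (y : pt) (c : coord) (t : R) : pt :=
  fun c' => if c' == c then t else y c'.

Definition pd (c : coord) (f : F) : F :=
  fun y => Derive (fun t => f (upd y c t)) (y c).
Definition ipd (cs : seq coord) (f : F) : F := foldr pd f cs.

Definition dep_on (f : F) (S : seq coord) : Prop :=
  forall y y' : pt, (forall c, c \in S -> y c = y' c) -> f y = f y'.

(* continuity for the product topology on coord -> R *)
Definition pcont (f : F) : Prop :=
  forall (y : pt) (eps : R), (0 < eps) ->
    exists (S : seq coord) (delta : R), (0 < delta) /\
      forall y' : pt, (forall c, c \in S -> (Rabs (y' c - y c) < delta)) ->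
        (Rabs (f y' - f y) < eps).

Definition smooth (f : F) : Prop :=
  (forall (cs : seq coord) (c : coord) (y : pt),
      ex_derive (fun t => ipd cs f (upd y c t)) (y c)) /\
  (forall cs : seq coord, pcont (ipd cs f)).

Definition AB (f : F) : Prop := (exists S, dep_on f S) /\ smooth f.

Definition supp (f : F) : seq coord :=
  epsilon (inhabits [::]) (fun S => dep_on f S).

Definition isjet (c : coord) : bool :=
  match c with inl (inl _) => false | _ => true end.
Definition shift (mu : 'I_m) (c : coord) : coord :=
  match c with
  | inl (inl _) => c
  | inl (inr (la, i)) => Uc la (addmi i mu)
  | inr i => Pc (addmi i mu)
  end.

(* total derivative D_mu = d/dx^mu + u^la_{i+(mu)} d/du^la_i + p_{i+(mu)} d/dp_i *)
Definition D (mu : 'I_m) (f : F) : F :=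
  fun y => (pd (Xc mu) f y +
    foldr Rplus 0
      (map (fun c => y (shift mu c) * pd c f y)
           (filter isjet (undup (supp f))))).

Definition Di (i : mi) (f : F) : F :=
  foldr (fun j g => iter (i j) (D j) g) f (enum 'I_m).

Definition fzero : F := fun _ => 0.
Definition fadd (f g : F) : F := fun y => (f y + g y).
Definition fmul (f g : F) : F := fun y => (f y * g y).
Definition fopp (f : F) : F := fun y => (- f y).
Definition fscal (a : R) (f : F) : F := fun y => (a * f y).
Definition fsub (f g : F) : F := fun y => (f y - g y).
Definition fsumM (h : 'I_m -> F) : F :=
  fun y => foldr (fun j acc => (h j y + acc)) 0 (enum 'I_m).
Definition fsumN (h : 'I_m -> F) : F :=
  fun y => foldr (fun j acc => (h j y + acc)) 0
                 (filter (fun j => j != ord0) (enum 'I_m)).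

Definition uf (la : 'I_m) (i : mi) : F := fun y => y (Uc la i).
Definition pf (i : mi) : F := fun y => y (Pc i).

Definition lap (f : F) : F := fsumM (fun mu => D mu (D mu f)).
Definition lap' (f : F) : F := fsumN (fun a => D a (D a f)).

Definition CE (i : mi) : F := fsumM (fun mu => uf mu (addmi i mu)).
Definition PE (i : mi) : F :=
  fadd (fsumM (fun mu => pf (addmi (addmi i mu) mu)))
       (Di i (fsumM (fun la => fsumM (fun mu =>
                fmul (uf la (unitmi mu)) (uf mu (unitmi la)))))).
Definition gen (b : bool) (i : mi) : F := if b then CE i else PE i.

Definition inJ (f : F) : Prop :=
  exists l : list (F * (bool * mi)),
    (forall q, List.In q l -> AB q.1) /\
    forall y, f y = List.fold_right
                      (fun q acc => (q.1 y * gen q.2.1 q.2.2 y + acc)) 0 l.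

(* equality in A(CPE) = A(B)/J *)
Definition eqJ (f g : F) : Prop := inJ (fsub f g).

End CPE.

(* Main.v *)
From HB Require Import structures.
From Stdlib Require Import Reals Lra Psatz ClassicalEpsilon FunctionalExtensionality.
From Coquelicot Require Import Coquelicot.
From mathcomp Require Import all_boot.
Require Import Defs.
Set Implicit Arguments.
Unset Strict Implicit.
Unset Printing Implicit Defensive.
Local Open Scope R_scope.

Lemma Rplus_assoc' : associative Rplus.
Proof. move=> x y z; ring. Qed.
HB.instance Definition _ := Monoid.isComLaw.Build R 0 Rplus Rplus_assoc' Rplus_comm Rplus_0_l.
HB.instance Definition _ := Monoid.isMulLaw.Build R 0 Rmult Rmult_0_l Rmult_0_r.
HB.instance Definition _ := Monoid.isAddLaw.Build R Rmult Rplus Rmult_plus_distr_r Rmult_plus_distr_l.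

Lemma foldr_map_big (A : Type) (s : seq A) (G : A -> R) :
  foldr Rplus 0 (map G s) = \big[Rplus/0]_(c <- s) G c.
Proof. elim: s => [|a s IH] /=; by rewrite ?big_nil ?big_cons ?IH. Qed.

Lemma foldr_big (A : Type) (s : seq A) (G : A -> R) :
  foldr (fun c acc => G c + acc) 0 s = \big[Rplus/0]_(c <- s) G c.
Proof. elim: s => [|a s IH] /=; by rewrite ?big_nil ?big_cons ?IH. Qed.

Section S1.
Variable n : nat.
Local Notation m := n.+2.
Local Notation F := (F n).
Local Notation pt := (pt n).
Local Notation coord := (coord n).

Lemma upd_same (y : pt) c t : upd y c t c = t.
Proof. by rewrite /upd eqxx. Qed.
Lemma upd_other (y : pt) c c' t : c' != c -> upd y c t c' = y c'.
Proof. by rewrite /upd => /negbTE ->. Qed.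
Lemma upd_id (y : pt) c : upd y c (y c) = y.
Proof. apply: functional_extensionality => c'; rewrite /upd; by case: eqP => [->|]. Qed.
Lemma upd_upd (y : pt) c s t : upd (upd y c s) c t = upd y c t.
Proof. apply: functional_extensionality => c'; rewrite /upd; by case: eqP. Qed.
Lemma upd_comm (y : pt) c c' s t : c != c' ->
  upd (upd y c s) c' t = upd (upd y c' t) c s.
Proof.
move=> ne; apply: functional_extensionality => e; rewrite /upd.
case: (eqVneq e c') => [E|_].
  subst e; by rewrite eq_sym (negbTE ne).
by [].
Qed.

Lemma pd_out (f : F) S c y : dep_on f S -> c \notin S -> pd c f y = 0.
Proof.
move=> Hd Hc; rewrite /pd.
rewrite (Derive_ext _ (fun _ => f y)) ?Derive_const // => t.
apply: Hd => c' Hc'; rewrite upd_other //.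
by apply/eqP => E; rewrite -E Hc' in Hc.
Qed.

Lemma dep_pd (f : F) S c : dep_on f S -> dep_on (pd c f) S.
Proof.
move=> Hd y y' Hyy'; case Hc: (c \in S).
  rewrite /pd (Hyy' c Hc); congr Derive; apply: functional_extensionality => t.
  apply: Hd => c' Hc'; rewrite /upd; case: eqP => //; by rewrite Hyy'.
by rewrite (pd_out y Hd) ?(pd_out y' Hd) ?Hc.
Qed.

Lemma dep_sub (f : F) S S' : dep_on f S -> {subset S <= S'} -> dep_on f S'.
Proof. move=> Hd Hs y y' H; apply: Hd => c Hc; exact: H (Hs _ Hc). Qed.

End S1.


Section S2.
Variable n : nat.
Local Notation m := n.+2.
Local Notation F := (F n).
Local Notation pt := (pt n).
Local Notation coord := (coord n).

Lemma mem_catl (T : eqType) (s1 s2 : seq T) x : x \in s1 -> x \in s1 ++ s2.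
Proof. by rewrite mem_cat => ->. Qed.
Lemma mem_catr (T : eqType) (s1 s2 : seq T) x : x \in s2 -> x \in s1 ++ s2.
Proof. by rewrite mem_cat => ->; rewrite orbT. Qed.

Definition exd (g : F) := forall c (y : pt), ex_derive (fun t => g (upd y c t)) (y c).

Lemma exd_at (g : F) c (y : pt) t0 : exd g -> ex_derive (fun t => g (upd y c t)) t0.
Proof.
move=> H; have := H c (upd y c t0); rewrite upd_same.
by apply: ex_derive_ext => t; rewrite upd_upd.
Qed.

Definition good (P : F -> Prop) :=
  forall g, P g -> exd g /\ pcont g /\ forall c, P (pd c g).

Lemma smooth_good (f : F) : smooth f -> exists P, good P /\ P f.
Proof.
case=> H1 H2; exists (fun g => exists cs, g = ipd cs f); split; last by exists [::].
move=> g [cs ->]; split; [|split].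
- move=> c y; exact: H1.
- exact: H2.
- move=> c; by exists (c :: cs).
Qed.

Lemma good_smooth P (f : F) : good P -> P f -> smooth f.
Proof.
move=> HP Pf.
have H : forall cs, P (ipd cs f).
  elim=> [|c cs IH] //=; exact: (HP _ IH).2.2.
split=> [cs c y|cs]; [exact: (HP _ (H cs)).1 | exact: (HP _ (H cs)).2.1].
Qed.

Lemma pcont_const (a : R) : pcont (fun _ : pt => a).
Proof.
move=> y eps He; exists [::], 1; split; first lra.
move=> y' _; rewrite Rminus_diag Rabs_R0 //.
Qed.

Lemma pcont_coord (e : coord) : pcont (fun y : pt => y e).
Proof.
move=> y eps He; exists [:: e], eps; split => // y' H; apply: H.
by rewrite inE eqxx.
Qed.

Lemma pcont_add (f g : F) : pcont f -> pcont g -> pcont (fun y => f y + g y).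
Proof.
move=> Hf Hg y eps He.
have He2 : 0 < eps / 2 by lra.
case: (Hf y _ He2) => S1 [d1 [Hd1 H1]].
case: (Hg y _ He2) => S2 [d2 [Hd2 H2]].
exists (S1 ++ S2), (Rmin d1 d2); split; first by apply: Rmin_pos.
move=> y' H.
have A := H1 y' (fun c Hc => Rlt_le_trans _ _ _ (H c (mem_catl _ Hc)) (Rmin_l _ _)).
have B := H2 y' (fun c Hc => Rlt_le_trans _ _ _ (H c (mem_catr _ Hc)) (Rmin_r _ _)).
have -> : f y' + g y' - (f y + g y) = (f y' - f y) + (g y' - g y) by ring.
apply: Rle_lt_trans; first exact: Rabs_triang. lra.
Qed.

Lemma pcont_mul (f g : F) : pcont f -> pcont g -> pcont (fun y => f y * g y).
Proof.
move=> Hf Hg y eps He.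
set a := Rabs (f y); set b := Rabs (g y).
have Ha : 0 <= a by apply: Rabs_pos.
have Hb : 0 <= b by apply: Rabs_pos.
set e := Rmin 1 (eps / (a + b + 1)).
have He0 : 0 < e by apply: Rmin_pos; [lra | apply: Rdiv_lt_0_compat; lra].
have He1 : e <= 1 by apply: Rmin_l.
have He2 : e * (a + b + 1) <= eps.
  have : e <= eps / (a + b + 1) by apply: Rmin_r.
  move=> h; apply: Rle_trans (Rmult_le_compat_r _ _ _ _ h) _; first lra.
  right; field; lra.
case: (Hf y _ He0) => S1 [d1 [Hd1 H1]].
case: (Hg y _ He0) => S2 [d2 [Hd2 H2]].
exists (S1 ++ S2), (Rmin d1 d2); split; first by apply: Rmin_pos.
move=> y' H.
have A := H1 y' (fun c Hc => Rlt_le_trans _ _ _ (H c (mem_catl _ Hc)) (Rmin_l _ _)).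
have B := H2 y' (fun c Hc => Rlt_le_trans _ _ _ (H c (mem_catr _ Hc)) (Rmin_r _ _)).
set u := f y' - f y in A; set v := g y' - g y in B.
have -> : f y' * g y' - f y * g y = u * v + u * g y + f y * v by rewrite /u /v; ring.
have Hu := Rabs_pos u; have Hv := Rabs_pos v.
apply: Rle_lt_trans; first apply: Rabs_triang.
apply: Rle_lt_trans; first (apply: Rplus_le_compat_r; apply: Rabs_triang).
rewrite !Rabs_mult -/a -/b.
nra.
Qed.

Lemma pcont_big (A : Type) (l : seq A) (G : A -> F) :
  (forall q, List.In q l -> pcont (G q)) ->
  pcont (fun y => \big[Rplus/0]_(q <- l) G q y).
Proof.
elim: l => [|q l IH] H.
  move=> y eps He; exists [::], 1; split; [lra|]; move=> y' _; by rewrite !big_nil Rminus_diag Rabs_R0.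
have -> : (fun y => \big[Rplus/0]_(q0 <- q :: l) G q0 y) =
          (fun y => G q y + \big[Rplus/0]_(q0 <- l) G q0 y).
  by apply: functional_extensionality => y; rewrite big_cons.
apply: pcont_add; first by apply: H; left.
apply: IH => q0 Hq0; apply: H; by right.
Qed.


Lemma ex_derive_big (A : Type) (l : seq A) (G : A -> R -> R) x :
  (forall q, List.In q l -> ex_derive (G q) x) ->
  ex_derive (fun t => \big[Rplus/0]_(q <- l) G q t) x.
Proof.
elim: l => [|q l IH] H.
  apply: (ex_derive_ext (fun _ => 0)); first by move=> t; rewrite big_nil.
  exact: ex_derive_const.
apply: (ex_derive_ext (fun t => G q t + \big[Rplus/0]_(q0 <- l) G q0 t)).
  by move=> t; rewrite big_cons.
apply: (ex_derive_plus (G q)); first by apply: H; left.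
apply: IH => q0 Hq0; apply: H; by right.
Qed.

Lemma Derive_big (A : Type) (l : seq A) (G : A -> R -> R) x :
  (forall q, List.In q l -> ex_derive (G q) x) ->
  Derive (fun t => \big[Rplus/0]_(q <- l) G q t) x =
  \big[Rplus/0]_(q <- l) Derive (G q) x.
Proof.
elim: l => [|q l IH] H.
  rewrite big_nil (Derive_ext _ (fun _ => 0)) ?Derive_const // => t; by rewrite big_nil.
rewrite big_cons (Derive_ext _ (fun t => G q t + \big[Rplus/0]_(q0 <- l) G q0 t)).
  2: by move=> t; rewrite big_cons.
rewrite (Derive_plus (G q)) ?IH //.
- move=> q0 Hq0; apply: H; by right.
- apply: H; by left.
- apply: ex_derive_big => q0 Hq0; apply: H; by right.
Qed.

Definition Pconst (g : F) := exists a : R, g = fun _ => a.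

Lemma pd_const (a : R) c : pd c (fun _ : pt => a) = fun _ => 0.
Proof. apply: functional_extensionality => y; by rewrite /pd Derive_const. Qed.

Lemma good_const : good Pconst.
Proof.
move=> g [a ->]; split; [|split].
- move=> c y; exact: ex_derive_const.
- exact: pcont_const.
- move=> c; exists 0; exact: pd_const.
Qed.

Lemma upd_coord (y : pt) c e t : upd y c t e = if e == c then t else y e.
Proof. by []. Qed.

Lemma exd_coord (e : coord) : exd (fun y => y e).
Proof.
move=> c y; rewrite /upd; case: (e == c).
  exact: ex_derive_id.
exact: ex_derive_const.
Qed.

Lemma pd_coord (e c : coord) :
  pd c (fun y : pt => y e) = fun _ => if e == c then 1 else 0.
Proof.
apply: functional_extensionality => y; rewrite /pd /upd; case: (e == c).
  exact: Derive_id.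
exact: Derive_const.
Qed.

Lemma good_coord (e : coord) : good (fun g => g = (fun y => y e) \/ Pconst g).
Proof.
move=> g [->|Hg].
  split; [exact: exd_coord | split; [exact: pcont_coord|]].
  move=> c; right; rewrite pd_coord; by eexists.
have [H1 [H2 H3]] := good_const Hg; split => //; split => // c; right; exact: H3.
Qed.

Lemma good_union P Q : good P -> good Q -> good (fun g => P g \/ Q g).
Proof.
move=> HP HQ g [Hg|Hg].
  have [H1 [H2 H3]] := HP _ Hg; split => //; split => // c; left; exact: H3.
have [H1 [H2 H3]] := HQ _ Hg; split => //; split => // c; right; exact: H3.
Qed.

Definition Pprod (P Q : F -> Prop) (h : F) :=
  exists l : seq (F * F), (forall q, List.In q l -> P q.1 /\ Q q.2) /\
    h = fun y => \big[Rplus/0]_(q <- l) (q.1 y * q.2 y).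

Lemma pd_mul_pt (f g : F) c (y : pt) : exd f -> exd g ->
  pd c (fun y => f y * g y) y = pd c f y * g y + f y * pd c g y.
Proof. move=> Hf Hg; rewrite /pd Derive_mult ?upd_id //; exact: exd_at. Qed.

Lemma good_prod P Q : good P -> good Q -> good (Pprod P Q).
Proof.
move=> HP HQ h [l [Hl ->]]; split; [|split].
- move=> c y /=; apply: (ex_derive_big (G := fun q t => q.1 (upd y c t) * q.2 (upd y c t))).
  move=> q Hq; have [Pq Qq] := Hl q Hq.
  apply: ex_derive_mult; [exact: (HP _ Pq).1 | exact: (HQ _ Qq).1].
- apply: pcont_big => q Hq; have [Pq Qq] := Hl q Hq.
  apply: pcont_mul; [exact: (HP _ Pq).2.1 | exact: (HQ _ Qq).2.1].
- move=> c.
  exists (flatten (map (fun q => [:: (pd c q.1, q.2); (q.1, pd c q.2)]) l)); split.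
    move=> q /List.in_flat_map [q0 [/List.in_map_iff [q1 [<- Hq1]] Hq]].
    have [Pq Qq] := Hl q1 Hq1.
    case: Hq => [<-|[<-|//]] /=; split => //; [exact: (HP _ Pq).2.2 | exact: (HQ _ Qq).2.2].
  apply: functional_extensionality => y.
  rewrite /pd (Derive_big (G := fun q t => q.1 (upd y c t) * q.2 (upd y c t))); last first.
    move=> q Hq; have [Pq Qq] := Hl q Hq.
    apply: ex_derive_mult; [exact: (HP _ Pq).1 | exact: (HQ _ Qq).1].
  elim: l Hl => [|q l IH] Hl; first by rewrite !big_nil.
  rewrite /= !big_cons /= IH; last first.
    move=> q0 Hq0; apply: Hl; by right.
  have [Pq Qq] := Hl q (or_introl erefl).
  rewrite Derive_mult; first by rewrite !upd_id Rplus_assoc.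
  exact: (HP _ Pq).1. exact: (HQ _ Qq).1.
Qed.

Lemma smooth_prod (f g h : F) : smooth f -> smooth g ->
  (forall y, h y = f y * g y) -> smooth h.
Proof.
move=> /smooth_good [P [HP Pf]] /smooth_good [Q [HQ Qg]] Hh.
apply: (good_smooth (good_prod HP HQ)).
exists [:: (f, g)]; split; first by move=> q [<-|//].
apply: functional_extensionality => y; by rewrite big_cons big_nil Rplus_0_r Hh.
Qed.

Lemma smooth_const (a : R) : smooth (fun _ : pt => a).
Proof. apply: (good_smooth good_const); by exists a. Qed.

Lemma smooth_coord (e : coord) : smooth (fun y : pt => y e).
Proof. apply: (good_smooth (P := fun g => g = (fun y => y e) \/ Pconst g)); [exact: good_coord | by left]. Qed.

Lemma smooth_add (f g h : F) : smooth f -> smooth g ->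
  (forall y, h y = f y + g y) -> smooth h.
Proof.
move=> /smooth_good [P [HP Pf]] /smooth_good [Q [HQ Qg]] Hh.
apply: (good_smooth (good_prod (good_union HP good_const) (good_union good_const HQ))).
exists [:: (f, fun _ => 1); (fun _ => 1, g)]; split.
  move=> q [<-|[<-|//]] /=; split.
  - by hnf; left.
  - hnf; left; by exists 1.
  - hnf; right; by exists 1.
  - by hnf; right.
apply: functional_extensionality => y; rewrite !big_cons big_nil Hh /=; ring.
Qed.

Lemma smooth_pd (f : F) c : smooth f -> smooth (pd c f).
Proof.
case=> H1 H2; split.
  move=> cs c0 y; have := H1 (rcons cs c) c0 y; by rewrite /ipd foldr_rcons.
move=> cs; have := H2 (rcons cs c); by rewrite /ipd foldr_rcons.
Qed.

Lemma smooth_exd (f : F) : smooth f -> exd f.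
Proof. case=> H1 _ c y; exact: (H1 [::]). Qed.

Lemma smooth_pcont (f : F) : smooth f -> pcont f.
Proof. case=> _ H2; exact: (H2 [::]). Qed.

End S2.


Section S3.
Variable n : nat.
Local Notation m := n.+2.
Local Notation F := (F n).
Local Notation pt := (pt n).
Local Notation coord := (coord n).

Lemma AB_smooth (f : F) : AB f -> smooth f.
Proof. by case. Qed.
Lemma AB_exd (f : F) : AB f -> exd f.
Proof. by move=> [_ /smooth_exd]. Qed.

Lemma AB_const (a : R) : AB (fun _ : pt => a).
Proof. split; [by exists [::] | exact: smooth_const]. Qed.

Lemma AB_coord (e : coord) : AB (fun y : pt => y e).
Proof.
split; last exact: smooth_coord.
exists [:: e] => y y' H; apply: H; by rewrite inE eqxx.
Qed.

Lemma AB_add (f g h : F) : AB f -> AB g -> (forall y, h y = f y + g y) -> AB h.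
Proof.
move=> [[S1 H1] Sf] [[S2 H2] Sg] Hh; split; last exact: smooth_add Sf Sg Hh.
exists (S1 ++ S2) => y y' H; rewrite !Hh.
rewrite (H1 y y') ?(H2 y y') // => c Hc; apply: H; [exact: mem_catr | exact: mem_catl].
Qed.

Lemma AB_mul (f g h : F) : AB f -> AB g -> (forall y, h y = f y * g y) -> AB h.
Proof.
move=> [[S1 H1] Sf] [[S2 H2] Sg] Hh; split; last exact: smooth_prod Sf Sg Hh.
exists (S1 ++ S2) => y y' H; rewrite !Hh.
rewrite (H1 y y') ?(H2 y y') // => c Hc; apply: H; [exact: mem_catr | exact: mem_catl].
Qed.

Lemma AB_pd (f : F) c : AB f -> AB (pd c f).
Proof.
move=> [[S H] Sf]; split; [exists S; exact: dep_pd | exact: smooth_pd].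
Qed.

Lemma AB_big (A : Type) (l : seq A) (G : A -> F) :
  (forall q, List.In q l -> AB (G q)) -> AB (fun y => \big[Rplus/0]_(q <- l) G q y).
Proof.
elim: l => [|q l IH] H.
  apply: (AB_add (AB_const 0) (AB_const 0)) => y; rewrite big_nil; ring.
apply: (AB_add (H q (or_introl erefl)) (IH (fun q0 Hq0 => H q0 (or_intror Hq0)))).
move=> y; by rewrite big_cons.
Qed.

Lemma AB_ext (f g : F) : AB f -> (forall y, g y = f y) -> AB g.
Proof. move=> Hf H; have -> // : g = f; exact: functional_extensionality. Qed.

Lemma AB_fadd (f g : F) : AB f -> AB g -> AB (fadd f g).
Proof. move=> Hf Hg; exact: AB_add Hf Hg _. Qed.
Lemma AB_fmul (f g : F) : AB f -> AB g -> AB (fmul f g).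
Proof. move=> Hf Hg; exact: AB_mul Hf Hg _. Qed.
Lemma AB_fscal a (f : F) : AB f -> AB (fscal a f).
Proof. move=> Hf; exact: AB_mul (AB_const a) Hf _. Qed.
Lemma AB_fopp (f : F) : AB f -> AB (fopp f).
Proof. move=> Hf; apply: AB_mul (AB_const (-1)) Hf _ => y; rewrite /fopp; ring. Qed.
Lemma AB_fsub (f g : F) : AB f -> AB g -> AB (fsub f g).
Proof. move=> Hf Hg; apply: AB_add Hf (AB_fopp Hg) _ => y; rewrite /fsub /fopp; ring. Qed.
Lemma AB_fzero : AB (@fzero n).
Proof. exact: AB_const. Qed.
Lemma AB_uf (la : 'I_m) i : AB (uf la i).
Proof. exact: AB_coord. Qed.
Lemma AB_pf i : AB (@pf n i).
Proof. exact: AB_coord. Qed.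

Definition sN : seq 'I_m := filter (fun j => j != ord0) (enum 'I_m).
Definition sM : seq 'I_m := enum 'I_m.

Lemma fsumN_big (h : 'I_m -> F) : fsumN h = fun y => \big[Rplus/0]_(j <- sN) h j y.
Proof. apply: functional_extensionality => y; by rewrite /fsumN foldr_big. Qed.
Lemma fsumM_big (h : 'I_m -> F) : fsumM h = fun y => \big[Rplus/0]_(j <- sM) h j y.
Proof. apply: functional_extensionality => y; by rewrite /fsumM foldr_big. Qed.

Lemma AB_fsumN (h : 'I_m -> F) : (forall j, AB (h j)) -> AB (fsumN h).
Proof. move=> H; rewrite fsumN_big; exact: AB_big. Qed.
Lemma AB_fsumM (h : 'I_m -> F) : (forall j, AB (h j)) -> AB (fsumM h).
Proof. move=> H; rewrite fsumM_big; exact: AB_big. Qed.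

Lemma pd_add_pt (f g : F) c (y : pt) : exd f -> exd g ->
  pd c (fun y => f y + g y) y = pd c f y + pd c g y.
Proof. move=> Hf Hg; rewrite /pd (Derive_plus (fun t => f (upd y c t))) //; exact: exd_at. Qed.

Lemma pd_big_pt (A : Type) (l : seq A) (G : A -> F) c (y : pt) :
  (forall q, List.In q l -> exd (G q)) ->
  pd c (fun y => \big[Rplus/0]_(q <- l) G q y) y = \big[Rplus/0]_(q <- l) pd c (G q) y.
Proof.
move=> H; rewrite /pd (Derive_big (G := fun q t => G q (upd y c t))) // => q Hq.
exact: exd_at (H q Hq).
Qed.

Lemma pd_add_AB (f g : F) c (y : pt) : AB f -> AB g ->
  pd c (fun y => f y + g y) y = pd c f y + pd c g y.
Proof. move=> /AB_exd Hf /AB_exd Hg; exact: pd_add_pt. Qed.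
Lemma pd_mul_AB (f g : F) c (y : pt) : AB f -> AB g ->
  pd c (fun y => f y * g y) y = pd c f y * g y + f y * pd c g y.
Proof. move=> /AB_exd Hf /AB_exd Hg; exact: pd_mul_pt. Qed.

Definition Lj (S : seq coord) := undup (filter (@isjet n) S).
Definition Drep (mu : 'I_m) (f : F) (S : seq coord) : F := fun y =>
  pd (Xc mu) f y + \big[Rplus/0]_(c <- Lj S) (y (shift mu c) * pd c f y).

Lemma supp_dep (f : F) : AB f -> dep_on f (supp f).
Proof. move=> [H _]; rewrite /supp; exact: epsilon_spec. Qed.

Lemma sum_restrict (s : seq coord) (P : pred coord) (G : coord -> R) :
  (forall c, c \in s -> ~~ P c -> G c = 0) ->
  \big[Rplus/0]_(c <- s) G c = \big[Rplus/0]_(c <- filter P s) G c.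
Proof.
elim: s => [|c s IH] H /=; first by rewrite !big_nil.
rewrite big_cons IH; last by move=> c0 Hc0; apply: H; rewrite inE Hc0 orbT.
case: ifP => Pc; first by rewrite big_cons.
rewrite H ?inE ?eqxx ?Pc //; exact: Rplus_0_l.
Qed.

Lemma D_repr (f : F) S (mu : 'I_m) : AB f -> dep_on f S -> D mu f = Drep mu f S.
Proof.
move=> Hf HS; have Hs := supp_dep Hf.
apply: functional_extensionality => y; rewrite /D /Drep foldr_map_big; congr (_ + _).
set G := fun c => y (shift mu c) * pd c f y.
rewrite (sum_restrict (P := fun c => c \in S)); last first.
  move=> c _ Hc; by rewrite /G (pd_out y HS Hc) Rmult_0_r.
rewrite [in RHS](sum_restrict (P := fun c => c \in supp f)); last first.
  move=> c _ Hc; by rewrite /G (pd_out y Hs Hc) Rmult_0_r.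
apply: perm_big; apply: uniq_perm.
- rewrite filter_uniq // filter_uniq // undup_uniq //.
- rewrite filter_uniq // /Lj undup_uniq //.
- move=> c; rewrite /Lj !(mem_filter, mem_undup) /=.
  by case: (c \in S); case: (isjet c); case: (c \in supp f).
Qed.

End S3.
Arguments AB_const {n} a.


Section S4.
Variable n : nat.
Local Notation m := n.+2.
Local Notation F := (F n).
Local Notation pt := (pt n).
Local Notation coord := (coord n).

Lemma AB_dep (f : F) : AB f -> exists S, dep_on f S.
Proof. by case. Qed.

Lemma D_add (mu : 'I_m) (f g : F) : AB f -> AB g ->
  D mu (fadd f g) = fadd (D mu f) (D mu g).
Proof.
move=> Hf Hg; have [S1 H1] := AB_dep Hf; have [S2 H2] := AB_dep Hg.
have Hfg := AB_fadd Hf Hg.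
have H1' : dep_on f (S1 ++ S2) by apply: dep_sub H1 _ => c; exact: mem_catl.
have H2' : dep_on g (S1 ++ S2) by apply: dep_sub H2 _ => c; exact: mem_catr.
have H12 : dep_on (fadd f g) (S1 ++ S2).
  move=> y y' H; rewrite /fadd (H1' y y' H) (H2' y y' H) //.
rewrite (D_repr _ Hfg H12) (D_repr _ Hf H1') (D_repr _ Hg H2').
apply: functional_extensionality => y; rewrite /Drep /fadd.
rewrite pd_add_AB //.
rewrite (eq_bigr (fun c => y (shift mu c) * pd c f y + y (shift mu c) * pd c g y)).
  rewrite big_split /=; ring.
move=> c _; rewrite pd_add_AB //; ring.
Qed.

Lemma D_mul (mu : 'I_m) (f g : F) : AB f -> AB g ->
  D mu (fmul f g) = fun y => D mu f y * g y + f y * D mu g y.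
Proof.
move=> Hf Hg; have [S1 H1] := AB_dep Hf; have [S2 H2] := AB_dep Hg.
have Hfg := AB_fmul Hf Hg.
have H1' : dep_on f (S1 ++ S2) by apply: dep_sub H1 _ => c; exact: mem_catl.
have H2' : dep_on g (S1 ++ S2) by apply: dep_sub H2 _ => c; exact: mem_catr.
have H12 : dep_on (fmul f g) (S1 ++ S2).
  move=> y y' H; rewrite /fmul (H1' y y' H) (H2' y y' H) //.
rewrite (D_repr _ Hfg H12) (D_repr _ Hf H1') (D_repr _ Hg H2').
apply: functional_extensionality => y; rewrite /Drep /fmul.
rewrite pd_mul_AB //.
rewrite (eq_bigr (fun c => (y (shift mu c) * pd c f y) * g y + f y * (y (shift mu c) * pd c g y))).
  rewrite big_split /= -big_distrl -big_distrr /=; ring.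
move=> c _; rewrite pd_mul_AB //; ring.
Qed.

Lemma D_const (mu : 'I_m) (a : R) : D mu (fun _ : pt => a) = (@fzero n).
Proof.
have H0 : dep_on (fun _ : pt => a) [::] by [].
rewrite (D_repr _ (AB_const a) H0); apply: functional_extensionality => y.
rewrite /Drep pd_const /Lj /= big_nil /fzero; ring.
Qed.

Lemma D_fzero (mu : 'I_m) : D mu (@fzero n) = @fzero n.
Proof. exact: D_const. Qed.

Lemma D_scal (mu : 'I_m) a (f : F) : AB f -> D mu (fscal a f) = fscal a (D mu f).
Proof.
move=> Hf; have -> : fscal a f = fmul (fun _ => a) f by [].
rewrite D_mul ?D_const //; last exact: AB_const.
apply: functional_extensionality => y; rewrite /fscal /fzero; ring.
Qed.

Lemma D_opp (mu : 'I_m) (f : F) : AB f -> D mu (fopp f) = fopp (D mu f).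
Proof.
move=> Hf; have -> : fopp f = fscal (-1) f.
  apply: functional_extensionality => y; rewrite /fopp /fscal; ring.
rewrite D_scal //; apply: functional_extensionality => y; rewrite /fopp /fscal; ring.
Qed.

Lemma D_sub (mu : 'I_m) (f g : F) : AB f -> AB g ->
  D mu (fsub f g) = fsub (D mu f) (D mu g).
Proof.
move=> Hf Hg; have -> : fsub f g = fadd f (fopp g) by [].
rewrite D_add ?D_opp //; exact: AB_fopp.
Qed.

Lemma D_coord (mu : 'I_m) (e : coord) : isjet e ->
  D mu (fun y : pt => y e) = fun y => y (shift mu e).
Proof.
move=> He; have H0 : dep_on (fun y : pt => y e) [:: e].
  move=> y y' H; apply: H; by rewrite inE eqxx.
rewrite (D_repr _ (AB_coord e) H0); apply: functional_extensionality => y.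
rewrite /Drep /Lj /= He /= big_cons big_nil !pd_coord eqxx.
have -> : (e == Xc mu) = false by clear H0; case: e He => [[x|p]|i].
ring.
Qed.

Lemma D_uf (mu la : 'I_m) i : D mu (uf la i) = uf la (addmi i mu).
Proof. exact: D_coord. Qed.

Lemma D_pf (mu : 'I_m) i : D mu (@pf n i) = pf (addmi i mu).
Proof. exact: D_coord. Qed.

Lemma D_big (mu : 'I_m) (A : Type) (l : seq A) (G : A -> F) :
  (forall q, List.In q l -> AB (G q)) ->
  D mu (fun y => \big[Rplus/0]_(q <- l) G q y) =
  fun y => \big[Rplus/0]_(q <- l) D mu (G q) y.
Proof.
elim: l => [|q l IH] H.
  have -> : (fun y : pt => \big[Rplus/0]_(q <- [::]) G q y) = fun _ => 0.
    apply: functional_extensionality => y; by rewrite big_nil.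
  rewrite D_const; apply: functional_extensionality => y; by rewrite big_nil.
have -> : (fun y : pt => \big[Rplus/0]_(q0 <- q :: l) G q0 y) =
          fadd (G q) (fun y => \big[Rplus/0]_(q0 <- l) G q0 y).
  apply: functional_extensionality => y; by rewrite big_cons.
rewrite D_add; first last.
- apply: AB_big => q0 Hq0; apply: H; by right.
- apply: H; by left.
rewrite IH; last by move=> q0 Hq0; apply: H; right.
apply: functional_extensionality => y; by rewrite /fadd big_cons.
Qed.

Lemma D_fsumN (mu : 'I_m) (h : 'I_m -> F) : (forall j, AB (h j)) ->
  D mu (fsumN h) = fsumN (fun j => D mu (h j)).
Proof. move=> H; rewrite !fsumN_big D_big //. Qed.

Lemma D_fsumM (mu : 'I_m) (h : 'I_m -> F) : (forall j, AB (h j)) ->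
  D mu (fsumM h) = fsumM (fun j => D mu (h j)).
Proof. move=> H; rewrite !fsumM_big D_big //. Qed.

Lemma AB_Drep (mu : 'I_m) (f : F) S : AB f -> AB (Drep mu f S).
Proof.
move=> Hf; apply: AB_add (AB_pd _ Hf) (AB_big (l := Lj S) (G := fun c y => y (shift mu c) * pd c f y) _) _ => //.
move=> c _; apply: AB_mul (AB_coord _) (AB_pd _ Hf) _ => //.
Qed.

Lemma AB_D (mu : 'I_m) (f : F) : AB f -> AB (D mu f).
Proof.
move=> Hf; have [S HS] := AB_dep Hf; rewrite (D_repr _ Hf HS); exact: AB_Drep.
Qed.

End S4.


Section S5.
Variable n : nat.
Local Notation m := n.+2.
Local Notation F := (F n).
Local Notation pt := (pt n).
Local Notation coord := (coord n).

Lemma cont2d (h : F) (y : pt) c c' : c != c' -> pcont h ->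
  continuity_2d_pt (fun u v => h (upd (upd y c u) c' v)) (y c) (y c').
Proof.
move=> ne Hh eps; have [S [d [Hd H]]] := Hh y eps (cond_pos eps).
exists (mkposreal d Hd) => u v /= Hu Hv.
rewrite upd_id upd_id; apply: H => c0 _.
case: (eqVneq c0 c') => [->|n1].
  by rewrite upd_same.
rewrite upd_other //; case: (eqVneq c0 c) => [->|n2].
  by rewrite upd_same.
rewrite upd_other // Rminus_diag Rabs_R0; exact: Hd.
Qed.

Lemma pd_comm (f : F) c c' (y : pt) : smooth f -> pd c (pd c' f) y = pd c' (pd c f) y.
Proof.
move=> Hf; case: (eqVneq c c') => [->//|ne].
have ne' : c' != c by rewrite eq_sym.
set g2 := fun u v => f (upd (upd y c u) c' v).
have E1 : forall z v, Derive (fun t => g2 z t) v = pd c' f (upd (upd y c z) c' v).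
  move=> z v; rewrite /pd /g2 upd_same; congr Derive.
  apply: functional_extensionality => t; by rewrite upd_upd.
have E2 : forall z u, Derive (fun t => g2 t z) u = pd c f (upd (upd y c u) c' z).
  move=> z u; rewrite /pd /g2 upd_comm // upd_same; congr Derive.
  apply: functional_extensionality => t; by rewrite upd_upd -upd_comm.
have E3 : forall u v, Derive (fun z => Derive (fun t => g2 z t) v) u =
                     pd c (pd c' f) (upd (upd y c u) c' v).
  move=> u v; rewrite [RHS]/pd -upd_comm // upd_same; congr Derive.
  apply: functional_extensionality => z; rewrite E1 upd_comm // upd_upd -upd_comm //.
have E4 : forall u v, Derive (fun z => Derive (fun t => g2 t z) u) v =
                     pd c' (pd c f) (upd (upd y c u) c' v).
  move=> u v; rewrite [RHS]/pd upd_same; congr Derive.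
  apply: functional_extensionality => z; by rewrite E2 upd_upd.
have S1 := smooth_pd c' Hf; have S2 := smooth_pd c Hf.
have := @Schwarz g2 (y c) (y c').
rewrite E3 E4 !upd_id => -> //.
- exists (mkposreal 1 Rlt_0_1) => u v _ _; split; [|split; [|split]].
  + rewrite /g2; apply: (ex_derive_ext (fun z => f (upd (upd y c' v) c z))).
      by move=> z; rewrite upd_comm.
    exact: exd_at (smooth_exd Hf).
  + rewrite /g2; exact: exd_at (smooth_exd Hf).
  + apply: (ex_derive_ext (fun z => pd c' f (upd (upd y c' v) c z))).
      by move=> z; rewrite E1 upd_comm.
    exact: exd_at (smooth_exd S1).
  + apply: (ex_derive_ext (fun z => pd c f (upd (upd y c u) c' z))).
      by move=> z; rewrite E2.
    exact: exd_at (smooth_exd S2).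
- move=> eps; have [d Hd] := cont2d y ne (smooth_pcont (smooth_pd c (smooth_pd c' Hf))) eps.
  exists d => u v Hu Hv; rewrite !E3 !upd_id; have := Hd u v Hu Hv; by rewrite !upd_id.
- move=> eps; have [d Hd] := cont2d y ne (smooth_pcont (smooth_pd c' (smooth_pd c Hf))) eps.
  exists d => u v Hu Hv; rewrite !E4 !upd_id; have := Hd u v Hu Hv; by rewrite !upd_id.
Qed.

End S5.


Section S6.
Variable n : nat.
Local Notation m := n.+2.
Local Notation F := (F n).
Local Notation pt := (pt n).
Local Notation coord := (coord n).

Lemma addmiC (i : mi n) (a b : 'I_m) : addmi (addmi i a) b = addmi (addmi i b) a.
Proof. apply/ffunP => j; rewrite !ffunE; by rewrite -!addnA (addnC (j == a)). Qed.

Lemma shiftC (mu nu : 'I_m) (c : coord) : shift mu (shift nu c) = shift nu (shift mu c).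
Proof. case: c => [[x|[la i]]|i] //=; by rewrite /Uc /Pc addmiC. Qed.

Lemma isjet_shift (mu : 'I_m) (c : coord) : isjet (shift mu c) = isjet c.
Proof. by case: c => [[x|[la i]]|i]. Qed.

Lemma jet_neqX (mu : 'I_m) (c : coord) : isjet c -> (c == Xc mu) = false.
Proof. by case: c => [[x|[la i]]|i]. Qed.

Lemma mem_Lj (S : seq coord) c : (c \in Lj S) = isjet c && (c \in S).
Proof. by rewrite /Lj mem_undup mem_filter. Qed.

Lemma uniq_Lj (S : seq coord) : uniq (Lj S).
Proof. exact: undup_uniq. Qed.

Lemma sum_sub2 (L L2 : seq coord) (G : coord -> R) : uniq L -> uniq L2 ->
  {subset L <= L2} -> (forall c, c \in L2 -> c \notin L -> G c = 0) ->
  \big[Rplus/0]_(c <- L2) G c = \big[Rplus/0]_(c <- L) G c.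
Proof.
move=> uL uL2 sub H; rewrite (sum_restrict (P := fun c => c \in L)) //.
apply: perm_big; apply: uniq_perm => //; first exact: filter_uniq.
move=> c; rewrite mem_filter; case Hc: (c \in L) => //=; exact: sub.
Qed.

Lemma sum_delta (s : seq coord) (e : coord) (G : coord -> R) : uniq s -> e \in s ->
  \big[Rplus/0]_(c <- s) ((if e == c then 1 else 0) * G c) = G e.
Proof.
elim: s => [|a s IH] //= /andP [Ha us]; rewrite inE big_cons.
case: (eqVneq e a) => [->|ne] /=.
  rewrite big1_seq; last first.
    move=> c /andP [_ Hc]; case: (eqVneq a c) => [E|_]; last ring.
    by rewrite E Hc in Ha.
  move=> _; ring.
move=> Hes; rewrite IH //; ring.
Qed.

Lemma DrepE (mu : 'I_m) (g : F) S y : Drep mu g S y =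
  pd (Xc mu) g y + \big[Rplus/0]_(c <- Lj S) (y (shift mu c) * pd c g y).
Proof. by []. Qed.

Lemma pd_Drep (nu : 'I_m) (f : F) S c' (y : pt) : AB f ->
  pd c' (Drep nu f S) y = pd c' (pd (Xc nu) f) y +
   \big[Rplus/0]_(c <- Lj S) ((if shift nu c == c' then 1 else 0) * pd c f y
                              + y (shift nu c) * pd c' (pd c f) y).
Proof.
move=> Hf; rewrite /Drep.
have HT : forall c, AB (fun y : pt => y (shift nu c) * pd c f y).
  move=> c; exact: AB_mul (AB_coord _) (AB_pd _ Hf) _.
rewrite (pd_add_AB (f := pd (Xc nu) f) (g := fun y => \big[Rplus/0]_(c <- Lj S) (y (shift nu c) * pd c f y))).
- congr (_ + _).
  rewrite (pd_big_pt (G := fun c y => y (shift nu c) * pd c f y)); last first.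
    move=> q _; exact: AB_exd.
  apply: eq_bigr => c _.
  rewrite (pd_mul_AB (f := fun y => y (shift nu c)) (g := pd c f)) ?pd_coord //.
  + exact: AB_coord.
  + exact: AB_pd.
- exact: AB_pd.
- exact: (AB_big (G := fun c y => y (shift nu c) * pd c f y)).
Qed.

Lemma dep_Drep (nu : 'I_m) (f : F) S : dep_on f S ->
  dep_on (Drep nu f S) (S ++ map (shift nu) S).
Proof.
move=> HS y y' H.
have HS' : forall y y' : pt, (forall c, c \in S -> y c = y' c) -> True by [].
have Hy : forall c, c \in S -> y c = y' c by move=> c Hc; apply: H; exact: mem_catl.
rewrite !DrepE (dep_pd _ HS Hy); congr (_ + _).
apply: eq_big_seq => c; rewrite mem_Lj => /andP [_ Hc].
rewrite (dep_pd _ HS Hy) H //; apply: mem_catr; exact: map_f.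
Qed.

Definition Sym (mu nu : 'I_m) (f : F) S (y : pt) :=
  pd (Xc mu) (pd (Xc nu) f) y
  + \big[Rplus/0]_(c <- Lj S) (y (shift nu c) * pd (Xc mu) (pd c f) y)
  + \big[Rplus/0]_(c <- Lj S) (y (shift mu c) * pd c (pd (Xc nu) f) y)
  + \big[Rplus/0]_(c' <- Lj S) \big[Rplus/0]_(c <- Lj S)
        (y (shift mu c') * (y (shift nu c) * pd c' (pd c f) y))
  + \big[Rplus/0]_(c <- Lj S) (y (shift mu (shift nu c)) * pd c f y).

Lemma D_DD (mu nu : 'I_m) (f : F) S : AB f -> dep_on f S ->
  D mu (D nu f) = Sym mu nu f S.
Proof.
move=> Hf HS.
have HS2 := dep_Drep (nu:=nu) HS.
rewrite (D_repr nu Hf HS) (D_repr mu (AB_Drep nu S Hf) HS2).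
apply: functional_extensionality => y.
rewrite DrepE pd_Drep //.
set L := Lj S; set L2 := Lj (S ++ map (shift nu) S).
have jL : forall c, c \in L -> isjet c by move=> c; rewrite mem_Lj => /andP [].
have sub : {subset L <= L2}.
  move=> c; rewrite !mem_Lj => /andP [-> Hc] /=; exact: mem_catl.
have zero : forall g c, dep_on g S -> c \in L2 -> c \notin L -> pd c g y = 0.
  move=> g c Hg Hc2 HcL; apply: (pd_out y Hg).
  apply/negP => HcS; move: HcL; rewrite mem_Lj HcS andbT.
  by move: Hc2; rewrite mem_Lj => /andP [-> _].
have E1 : \big[Rplus/0]_(c <- L) ((if shift nu c == Xc mu then 1 else 0) * pd c f y
      + y (shift nu c) * pd (Xc mu) (pd c f) y)
    = \big[Rplus/0]_(c <- L) (y (shift nu c) * pd (Xc mu) (pd c f) y).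
  apply: eq_big_seq => c Hc; rewrite jet_neqX ?isjet_shift; [ring | exact: jL].
have EA : \big[Rplus/0]_(c' <- L2) (y (shift mu c') * pd c' (pd (Xc nu) f) y)
    = \big[Rplus/0]_(c <- L) (y (shift mu c) * pd c (pd (Xc nu) f) y).
  apply: sum_sub2; rewrite ?uniq_Lj //.
  move=> c Hc2 HcL; rewrite (zero _ c (dep_pd _ HS) Hc2 HcL); ring.
have EC : \big[Rplus/0]_(c' <- L2) \big[Rplus/0]_(c <- L)
      (y (shift mu c') * (y (shift nu c) * pd c' (pd c f) y))
    = \big[Rplus/0]_(c' <- L) \big[Rplus/0]_(c <- L)
      (y (shift mu c') * (y (shift nu c) * pd c' (pd c f) y)).
  apply: sum_sub2; rewrite ?uniq_Lj //.
  move=> c Hc2 HcL; apply: big1 => c0 _; rewrite (zero _ c (dep_pd _ HS) Hc2 HcL); ring.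
have EB : \big[Rplus/0]_(c' <- L2) \big[Rplus/0]_(c <- L)
      ((if shift nu c == c' then 1 else 0) * (y (shift mu c') * pd c f y))
    = \big[Rplus/0]_(c <- L) (y (shift mu (shift nu c)) * pd c f y).
  rewrite exchange_big /=; apply: eq_big_seq => c Hc.
  rewrite (sum_delta (fun c' => y (shift mu c') * pd c f y)) //.
  - exact: uniq_Lj.
  - rewrite mem_Lj isjet_shift jL //=; apply: mem_catr; apply: map_f.
    by move: Hc; rewrite mem_Lj => /andP [].
have E2 : \big[Rplus/0]_(c' <- L2) (y (shift mu c') * pd c' (Drep nu f S) y)
    = \big[Rplus/0]_(c <- L) (y (shift mu c) * pd c (pd (Xc nu) f) y)
      + \big[Rplus/0]_(c <- L) (y (shift mu (shift nu c)) * pd c f y)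
      + \big[Rplus/0]_(c' <- L) \big[Rplus/0]_(c <- L)
          (y (shift mu c') * (y (shift nu c) * pd c' (pd c f) y)).
  rewrite (eq_bigr (fun c' => y (shift mu c') * pd c' (pd (Xc nu) f) y
    + \big[Rplus/0]_(c <- L) ((if shift nu c == c' then 1 else 0) * (y (shift mu c') * pd c f y))
    + \big[Rplus/0]_(c <- L) (y (shift mu c') * (y (shift nu c) * pd c' (pd c f) y)))); last first.
    move=> c' _; rewrite pd_Drep // Rmult_plus_distr_l big_distrr /= [RHS]Rplus_assoc -big_split /=.
    congr (_ + _); apply: eq_bigr => c _; ring.
  by rewrite !big_split /= EA EB EC.
rewrite E1 E2 /Sym -/L; ring.
Qed.

Lemma D_comm (mu nu : 'I_m) (f : F) : AB f -> D mu (D nu f) = D nu (D mu f).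
Proof.
move=> Hf; have [S HS] := AB_dep Hf; have Sf := AB_smooth Hf.
rewrite (D_DD mu nu Hf HS) (D_DD nu mu Hf HS).
apply: functional_extensionality => y; rewrite /Sym.
have T1 : pd (Xc mu) (pd (Xc nu) f) y = pd (Xc nu) (pd (Xc mu) f) y by apply: pd_comm.
have T23 : forall a b : 'I_m, \big[Rplus/0]_(c <- Lj S) (y (shift b c) * pd (Xc a) (pd c f) y)
   = \big[Rplus/0]_(c <- Lj S) (y (shift b c) * pd c (pd (Xc a) f) y).
  move=> a b; apply: eq_bigr => c _; by rewrite (pd_comm _ _ _ Sf).
have T4 : \big[Rplus/0]_(c' <- Lj S) \big[Rplus/0]_(c <- Lj S)
        (y (shift mu c') * (y (shift nu c) * pd c' (pd c f) y))
   = \big[Rplus/0]_(c' <- Lj S) \big[Rplus/0]_(c <- Lj S)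
        (y (shift nu c') * (y (shift mu c) * pd c' (pd c f) y)).
  rewrite exchange_big /=; apply: eq_bigr => c _; apply: eq_bigr => c' _.
  rewrite (pd_comm _ _ _ Sf); ring.
have T5 : \big[Rplus/0]_(c <- Lj S) (y (shift mu (shift nu c)) * pd c f y)
   = \big[Rplus/0]_(c <- Lj S) (y (shift nu (shift mu c)) * pd c f y).
  apply: eq_bigr => c _; by rewrite shiftC.
rewrite T1 !T23 T4 T5; ring.
Qed.

End S6.


Section S7.
Variable n : nat.
Local Notation m := n.+2.
Local Notation F := (F n).
Local Notation pt := (pt n).
Local Notation coord := (coord n).

Lemma AB_iter k (j : 'I_m) (f : F) : AB f -> AB (iter k (D j) f).
Proof. move=> Hf; elim: k => [|k IH] //=; exact: AB_D. Qed.

Definition Gs (s : seq 'I_m) (i : mi n) (f : F) : F :=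
  foldr (fun j g => iter (i j) (D j) g) f s.

Lemma AB_Gs s i (f : F) : AB f -> AB (Gs s i f).
Proof. move=> Hf; elim: s => [|j s IH] //=; exact: AB_iter. Qed.

Lemma D_iter (mu j : 'I_m) k (g : F) : AB g -> D mu (iter k (D j) g) = iter k (D j) (D mu g).
Proof.
move=> Hg; elim: k => [|k IH] //=.
rewrite D_comm ?IH //; exact: AB_iter.
Qed.

Lemma Gs_notin s i (mu : 'I_m) (f : F) : mu \notin s -> Gs s (addmi i mu) f = Gs s i f.
Proof.
elim: s => [|j s IH] //=; rewrite inE negb_or => /andP [ne Hs].
rewrite IH // /addmi ffunE eq_sym (negbTE ne) addn0 //.
Qed.

Lemma D_Gs s i (mu : 'I_m) (f : F) : AB f -> uniq s -> mu \in s ->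
  D mu (Gs s i f) = Gs s (addmi i mu) f.
Proof.
move=> Hf; elim: s => [|j s IH] //= /andP [Hj us]; rewrite inE.
case: (eqVneq mu j) => [->|ne] /= Hm.
  rewrite Gs_notin // /addmi ffunE eqxx addn1 //.
rewrite D_iter ?IH //; last exact: AB_Gs.
rewrite /addmi ffunE eq_sym (negbTE ne) addn0 //.
Qed.

Lemma AB_Di i (f : F) : AB f -> AB (Di i f).
Proof. exact: AB_Gs. Qed.

Lemma D_Di (mu : 'I_m) i (f : F) : AB f -> D mu (Di i f) = Di (addmi i mu) f.
Proof. move=> Hf; apply: D_Gs => //; [exact: enum_uniq | exact: mem_enum]. Qed.

Definition Qf : F := fsumM (fun la => fsumM (fun mu =>
                fmul (uf la (unitmi mu)) (uf mu (unitmi la)))).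

Lemma AB_Qf : AB Qf.
Proof.
apply: AB_fsumM => la; apply: AB_fsumM => mu; apply: AB_fmul; exact: AB_uf.
Qed.

Lemma AB_CE i : AB (@CE n i).
Proof. apply: AB_fsumM => mu; exact: AB_uf. Qed.

Lemma AB_PE i : AB (@PE n i).
Proof.
apply: AB_fadd; first (apply: AB_fsumM => mu; exact: AB_pf).
exact: (AB_Di _ AB_Qf).
Qed.

Lemma AB_gen b i : AB (@gen n b i).
Proof. case: b; [exact: AB_CE | exact: AB_PE]. Qed.

Lemma D_CE (mu : 'I_m) i : D mu (CE i) = CE (addmi i mu).
Proof.
rewrite /CE D_fsumM; last by move=> j; exact: AB_uf.
congr fsumM; apply: functional_extensionality => la; by rewrite D_uf addmiC.
Qed.

Lemma D_PE (mu : 'I_m) i : D mu (PE i) = PE (addmi i mu).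
Proof.
rewrite /PE D_add; first last.
- exact: (AB_Di _ AB_Qf).
- apply: AB_fsumM => j; exact: AB_pf.
rewrite D_fsumM; last by move=> j; exact: AB_pf.
rewrite (D_Di _ _ AB_Qf); congr fadd.
congr fsumM; apply: functional_extensionality => la; rewrite D_pf.
by rewrite addmiC [addmi (addmi i mu) la]addmiC.
Qed.

Lemma D_gen (mu : 'I_m) b i : D mu (gen b i) = gen b (addmi i mu).
Proof. case: b; [exact: D_CE | exact: D_PE]. Qed.

Definition JF (l : list (F * (bool * mi n))) : F :=
  fun y => List.fold_right (fun q acc => q.1 y * gen q.2.1 q.2.2 y + acc) 0 l.

Lemma inJ_ext (f g : F) : inJ g -> (forall y, f y = g y) -> inJ f.
Proof. move=> [l [H1 H2]] H; exists l; split => // y; by rewrite H H2. Qed.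

Lemma inJ_JF l : (forall q, List.In q l -> AB q.1) -> inJ (JF l).
Proof. by exists l. Qed.

Lemma inJ0 : inJ (@fzero n).
Proof. exists [::]; split => //. Qed.

Lemma inJ_add (f g : F) : inJ f -> inJ g -> inJ (fadd f g).
Proof.
move=> [l1 [A1 B1]] [l2 [A2 B2]]; exists (l1 ++ l2); split.
  move=> q Hq; case: (List.in_app_or _ _ _ Hq) => ?; [exact: A1 | exact: A2].
move=> y; rewrite /fadd B1 B2; elim: l1 {A1 B1} => [|q l1 IH] /=; first ring.
rewrite -IH; set t := List.fold_right _ _ l1; set g0 := gen _ _ _; set a := q.1 y; ring.
Qed.

Lemma inJ_mul (h f : F) : AB h -> inJ f -> inJ (fmul h f).
Proof.
move=> Hh [l [A B]]; exists (map (fun q => (fmul h q.1, q.2)) l); split.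
  move=> q /List.in_map_iff [q0 [<- Hq0]] /=; apply: AB_fmul => //; exact: A.
move=> y; rewrite /fmul B; elim: l {A B} => [|q l IH] /=; first ring.
rewrite -IH; set t := List.fold_right _ _ l; set g := gen _ _ _; set a := q.1 y; ring.
Qed.

Lemma inJ_gen b i : inJ (@gen n b i).
Proof.
exists [:: (fun _ => 1, (b, i))]; split.
  move=> q [<-|//]; exact: AB_const.
move=> y /=; ring.
Qed.

Lemma AB_JF l : (forall q, List.In q l -> AB q.1) -> AB (JF l).
Proof.
elim: l => [|q l IH] H; first exact: AB_const.
apply: (AB_add (f := fmul q.1 (gen q.2.1 q.2.2)) (g := JF l)) => //.
- apply: AB_fmul; [apply: H; by left | exact: AB_gen].
- apply: IH => q0 Hq0; apply: H; by right.
Qed.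

Lemma inJ_AB (f : F) : inJ f -> AB f.
Proof.
move=> [l [A B]]; apply: (AB_ext (f := JF l)); last exact: B.
exact: AB_JF.
Qed.

Lemma inJ_D (mu : 'I_m) (f : F) : inJ f -> inJ (D mu f).
Proof.
move=> [l [A B]].
have -> : f = JF l by apply: functional_extensionality.
elim: l A {B} => [|q l IH] A.
  have -> : JF [::] = fun _ => 0 by [].
  rewrite D_const; exact: inJ0.
have -> : JF (q :: l) = fadd (fmul q.1 (gen q.2.1 q.2.2)) (JF l) by [].
have Aq : AB q.1 by apply: A; left.
have Al : forall q0, List.In q0 l -> AB q0.1 by move=> q0 Hq0; apply: A; right.
rewrite D_add; first last.
- exact: AB_JF.
- apply: AB_fmul => //; exact: AB_gen.
apply: inJ_add; last exact: IH.
rewrite D_mul //; last exact: AB_gen.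
rewrite D_gen.
apply: (inJ_ext (g := fadd (fmul (D mu q.1) (gen q.2.1 q.2.2))
                          (fmul q.1 (gen q.2.1 (addmi q.2.2 mu))))).
  apply: inJ_add; apply: inJ_mul.
  - exact: AB_D.
  - exact: inJ_gen.
  - exact: Aq.
  - exact: inJ_gen.
move=> y; by rewrite /fadd /fmul.
Qed.

End S7.


Ltac ab := repeat match goal with
 | |- forall _, _ => intro
 | |- AB (fadd _ _) => apply: AB_fadd
 | |- AB (fmul _ _) => apply: AB_fmul
 | |- AB (fscal _ _) => apply: AB_fscal
 | |- AB (fsub _ _) => apply: AB_fsub
 | |- AB (fopp _) => apply: AB_fopp
 | |- AB (D _ _) => apply: AB_D
 | |- AB (uf _ _) => apply: AB_uf
 | |- AB (fsumN _) => apply: AB_fsumN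
 | |- AB (fsumM _) => apply: AB_fsumM
 | |- AB ((fun _ => _) _) => cbv beta
 | |- AB _ => first [assumption | exact: AB_fzero | exact: AB_const]
 end.

Section SM.
Variable n : nat.
Local Notation m := n.+2.
Local Notation F := (F n).
Local Notation pt := (pt n).
Local Notation coord := (coord n).

Lemma fsumN_pt (h : 'I_m -> F) y : fsumN h y = \big[Rplus/0]_(j <- sN n) h j y.
Proof. by rewrite /fsumN foldr_big. Qed.

Lemma fsumM_pt (h : 'I_m -> F) y : fsumM h y = h ord0 y + \big[Rplus/0]_(j <- sN n) h j y.
Proof.
rewrite /fsumM foldr_big (bigD1_seq ord0) ?mem_enum ?enum_uniq //=.
by rewrite /sN big_filter.
Qed.

Lemma inJ_sum3 (f a b c ha hb hc : F) : AB ha -> AB hb -> AB hc ->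
  inJ a -> inJ b -> inJ c ->
  (forall y, f y = ha y * a y + hb y * b y + hc y * c y) -> inJ f.
Proof.
move=> Ha Hb Hc Ja Jb Jc H.
apply: (inJ_ext (g := fadd (fadd (fmul ha a) (fmul hb b)) (fmul hc c))); last first.
  move=> y; by rewrite H.
apply: inJ_add; [apply: inJ_add|]; exact: inJ_mul.
Qed.

Lemma inJ_sum4 (f a b c d ha hb hc hd : F) : AB ha -> AB hb -> AB hc -> AB hd ->
  inJ a -> inJ b -> inJ c -> inJ d ->
  (forall y, f y = ha y * a y + hb y * b y + hc y * c y + hd y * d y) -> inJ f.
Proof.
move=> Ha Hb Hc Hd Ja Jb Jc Jd H.
apply: (inJ_ext (g := fadd (fadd (fadd (fmul ha a) (fmul hb b)) (fmul hc c)) (fmul hd d))); last first.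
  move=> y; by rewrite H.
apply: inJ_add; [apply: inJ_add; [apply: inJ_add|]|]; exact: inJ_mul.
Qed.

Lemma inJ_c3 (f a b c : F) (ka kb kc : R) :
  inJ a -> inJ b -> inJ c ->
  (forall y, f y = ka * a y + kb * b y + kc * c y) -> inJ f.
Proof. move=> Ja Jb Jc H; exact: (inJ_sum3 (AB_const ka) (AB_const kb) (AB_const kc) Ja Jb Jc H). Qed.


Definition ub : F := fsumN (fun b => uf b (unitmi b)).

Lemma core7 (chiu chik0 chip1 : F) (a : 'I_m) : AB chiu -> AB chik0 -> AB chip1 -> forall y,
  fsub (D a chiu) (fscal (-2) (fadd (fsumM (fun mu => fmul (uf mu (unitmi a)) (D mu chip1)))
        (D a (fmul (fsumN (fun b => uf b (unitmi b))) chip1)))) y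
  = fsub (fadd (D ord0 chik0) (fadd (D a chiu) (fadd (@fzero n) (fscal 2
       (fadd (D a (fmul (fsumN (fun b => uf b (unitmi b))) chip1))
       (fadd (@fzero n) (fsumN (fun b => D b (fmul (uf b (unitmi a)) chip1))))))))) (@fzero n) y
   - D ord0 (fsub chik0 (fscal 2 (fmul (uf ord0 (unitmi a)) chip1))) y
   - 2 * (chip1 y * CE (unitmi a) y).
Proof.
move=> Hu Hk Hp y.
have E1 : (fun b => D b (fmul (uf b (unitmi a)) chip1)) =
   fun b => fun y => uf b (addmi (unitmi a) b) y * chip1 y + uf b (unitmi a) y * D b chip1 y.
  apply: functional_extensionality => b; rewrite D_mul ?D_uf //; exact: AB_uf.
rewrite E1 D_sub //; last by apply: AB_fscal; apply: AB_fmul => //; exact: AB_uf.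
rewrite D_scal; last by apply: AB_fmul => //; exact: AB_uf.
rewrite (@D_mul _ ord0 (uf ord0 (unitmi a)) chip1 (AB_uf _ _) Hp) D_uf.
rewrite /CE /fsub /fadd /fscal /fzero /fmul !fsumN_pt !fsumM_pt big_split /= -big_distrl /=.
set A := \big[Rplus/0]_(j <- sN n) uf j (addmi (unitmi a) j) y.
set B := \big[Rplus/0]_(j <- sN n) (uf j (unitmi a) y * D j chip1 y).
set X := D a (fun y => fsumN (fun b => uf b (unitmi b)) y * chip1 y) y.
ring.
Qed.



Lemma mi_swap (x y : 'I_m) : addmi (unitmi x) y = addmi (unitmi y) x :> mi n.
Proof. apply/ffunP => j; rewrite !ffunE; move: (j == x) (j == y) => p q; by case: p; case: q. Qed.

Lemma mi_3 (x y z : 'I_m) : addmi (addmi (unitmi x) y) z = addmi (addmi (unitmi y) z) x :> mi n.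
Proof.
apply/ffunP => j; rewrite !ffunE; move: (j == x) (j == y) (j == z) => p q r.
by case: p; case: q; case: r.
Qed.

Lemma sum_sub (r : seq 'I_m) (G1 G2 : 'I_m -> R) :
  \big[Rplus/0]_(j <- r) (G1 j - G2 j) =
  \big[Rplus/0]_(j <- r) G1 j - \big[Rplus/0]_(j <- r) G2 j.
Proof.
elim: r => [|x r IH]; first by rewrite !big_nil; ring.
rewrite !big_cons IH; ring.
Qed.

Lemma core5 (chiu chip1 : F) (a : 'I_m) : AB chiu -> AB chip1 -> forall y,
  fsub (fsumM (fun mu => fsub (fmul (uf mu (unitmi ord0)) (D mu (D a chip1)))
                              (fmul (uf mu (unitmi a)) (D mu (D ord0 chip1))))) (@fzero n) y
  = /2 * D a (fsub (D ord0 chiu) (fscal (-2) (fsumN (fun b => D b (fmul (uf b (unitmi ord0)) chip1))))) y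
    - /2 * D ord0 (fsub (D a chiu) (fscal (-2) (fadd (fsumM (fun mu => fmul (uf mu (unitmi a)) (D mu chip1)))
        (D a (fmul (fsumN (fun b => uf b (unitmi b))) chip1))))) y
    + CE (unitmi a) y * D ord0 chip1 y + CE (@mi0 n) y * D ord0 (D a chip1) y.
Proof.
move=> Hu Hp y.
set ubb := fsumN (fun b => uf b (unitmi b)).
have Hub : AB ubb by rewrite /ubb; ab.
have Eab : forall b : 'I_m, D a (D b (fmul (uf b (unitmi ord0)) chip1)) =
   fadd (fadd (fmul (uf b (addmi (addmi (unitmi b) a) ord0)) chip1)
              (fmul (uf b (addmi (unitmi b) ord0)) (D a chip1)))
        (fadd (fmul (uf b (addmi (unitmi a) ord0)) (D b chip1))
              (fmul (uf b (unitmi ord0)) (D b (D a chip1)))).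
  move=> b.
  have -> : D b (fmul (uf b (unitmi ord0)) chip1) =
     fadd (fmul (uf b (addmi (unitmi ord0) b)) chip1) (fmul (uf b (unitmi ord0)) (D b chip1)).
    by rewrite D_mul ?D_uf //; ab.
  rewrite D_add; try by ab.
  rewrite (@D_mul _ a (uf b (addmi (unitmi ord0) b)) chip1); try by ab.
  rewrite (@D_mul _ a (uf b (unitmi ord0)) (D b chip1)); try by ab.
  rewrite !D_uf (D_comm a b Hp) (mi_swap ord0 b) (mi_swap ord0 a).
  have -> : addmi (addmi (unitmi b) ord0) a = addmi (addmi (unitmi b) a) ord0 :> mi n.
    apply/ffunP => j; rewrite !ffunE; move: (j == b) (j == a) (j == ord0) => p q r.
    by case: p; case: q; case: r.
  by [].
have ESN : D a (fsumN (fun b => D b (fmul (uf b (unitmi ord0)) chip1))) =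
  fsumN (fun b => fadd (fadd (fmul (uf b (addmi (addmi (unitmi b) a) ord0)) chip1)
              (fmul (uf b (addmi (unitmi b) ord0)) (D a chip1)))
        (fadd (fmul (uf b (addmi (unitmi a) ord0)) (D b chip1))
              (fmul (uf b (unitmi ord0)) (D b (D a chip1))))).
  rewrite D_fsumN; last by ab.
  congr fsumN; apply: functional_extensionality => b; exact: Eab.
have E0a : D ord0 (fsumM (fun mu => fmul (uf mu (unitmi a)) (D mu chip1))) =
  fsumM (fun mu => fadd (fmul (uf mu (addmi (unitmi a) ord0)) (D mu chip1))
                        (fmul (uf mu (unitmi a)) (D mu (D ord0 chip1)))).
  rewrite D_fsumM; last by ab.
  congr fsumM; apply: functional_extensionality => mu.
  rewrite D_mul; try by ab.
  by rewrite D_uf (D_comm ord0 mu Hp).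
have Eub_a : D a ubb = fsumN (fun b => uf b (addmi (unitmi b) a)).
  rewrite /ubb D_fsumN; last by ab.
  congr fsumN; apply: functional_extensionality => b; exact: D_uf.
have Eub_0 : D ord0 ubb = fsumN (fun b => uf b (addmi (unitmi b) ord0)).
  rewrite /ubb D_fsumN; last by ab.
  congr fsumN; apply: functional_extensionality => b; exact: D_uf.
have Eub_a0 : D ord0 (fsumN (fun b => uf b (addmi (unitmi b) a))) =
   fsumN (fun b => uf b (addmi (addmi (unitmi b) a) ord0)).
  rewrite D_fsumN; last by ab.
  congr fsumN; apply: functional_extensionality => b; exact: D_uf.
have EaU1 : D a (fmul ubb chip1) =
   fadd (fmul (fsumN (fun b => uf b (addmi (unitmi b) a))) chip1) (fmul ubb (D a chip1)).
  rewrite D_mul; try by ab.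
  by rewrite Eub_a.
have EaU : D ord0 (D a (fmul ubb chip1)) =
  fadd (fadd (fmul (fsumN (fun b => uf b (addmi (addmi (unitmi b) a) ord0))) chip1)
             (fmul (fsumN (fun b => uf b (addmi (unitmi b) a))) (D ord0 chip1)))
       (fadd (fmul (fsumN (fun b => uf b (addmi (unitmi b) ord0))) (D a chip1))
             (fmul ubb (D ord0 (D a chip1)))).
  rewrite EaU1 D_add; try by ab.
  rewrite (@D_mul _ ord0 (fsumN (fun b => uf b (addmi (unitmi b) a))) chip1); try by ab.
  rewrite (@D_mul _ ord0 ubb (D a chip1)); try by ab.
  by rewrite Eub_a0 Eub_0.
rewrite D_sub; try by ab.
rewrite D_sub; try by ab.
rewrite !D_scal; try by ab.
rewrite ESN D_add; try by ab.
rewrite E0a EaU (D_comm a ord0 Hu).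
rewrite /fsub /fadd /fscal /fzero /fmul /CE /ubb.
rewrite !fsumN_pt !fsumM_pt.
set A := \big[Rplus/0]_(j <- sN n) (uf j (unitmi ord0) y * D j (D a chip1) y).
set B := \big[Rplus/0]_(j <- sN n) (uf j (unitmi a) y * D j (D ord0 chip1) y).
set C := \big[Rplus/0]_(j <- sN n) (uf j (addmi (unitmi a) ord0) y * D j chip1 y).
set P4 := \big[Rplus/0]_(j <- sN n) uf j (addmi (addmi (unitmi j) a) ord0) y.
set P5 := \big[Rplus/0]_(j <- sN n) uf j (addmi (unitmi j) a) y.
set P6 := \big[Rplus/0]_(j <- sN n) uf j (addmi (unitmi j) ord0) y.
set P7 := \big[Rplus/0]_(j <- sN n) uf j (unitmi j) y.
have h1 : \big[Rplus/0]_(j <- sN n) (uf j (unitmi ord0) y * D j (D a chip1) y -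
      uf j (unitmi a) y * D j (D ord0 chip1) y) = A - B by rewrite sum_sub.
have h2 : \big[Rplus/0]_(j <- sN n)
      (uf j (addmi (addmi (unitmi j) a) ord0) y * chip1 y +
       uf j (addmi (unitmi j) ord0) y * D a chip1 y +
       (uf j (addmi (unitmi a) ord0) y * D j chip1 y +
        uf j (unitmi ord0) y * D j (D a chip1) y)) = P4 * chip1 y + P6 * D a chip1 y + (C + A).
  by rewrite !big_split /= -!big_distrl.
have h3 : \big[Rplus/0]_(j <- sN n)
       (uf j (addmi (unitmi a) ord0) y * D j chip1 y +
        uf j (unitmi a) y * D j (D ord0 chip1) y) = C + B by rewrite big_split.
have h4 : \big[Rplus/0]_(j <- sN n) uf j (addmi (unitmi a) j) y = P5.
  by apply: eq_bigr => j _; rewrite mi_swap.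
have h5 : \big[Rplus/0]_(j <- sN n) uf j (addmi (mi0 n) j) y = P7 by [].
have h6 : uf ord0 (addmi (mi0 n) ord0) y = uf ord0 (unitmi ord0) y by [].
rewrite h1 h2 h3 h4 ?h5 ?h6.
set X := D ord0 (D a chiu) y.
set u00 := uf ord0 (unitmi ord0) y. set u0a := uf ord0 (unitmi a) y.
set u0t := uf ord0 (addmi (unitmi a) ord0) y.
set d1 := D ord0 (D a chip1) y. set d2 := D ord0 (D ord0 chip1) y.
set d3 := D ord0 chip1 y. set d4 := D a chip1 y. set c := chip1 y.
field.
Qed.

End SM.

Theorem lemma2 (n : nat) (chiu : F n) (chik : nat -> 'I_n.+2 -> F n)
    (chip0 chip1 : F n) :
  AB chiu -> (forall k a, a != ord0 -> AB (chik k a)) -> AB chip0 -> AB chip1 ->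
  (exists K : nat, forall k a, (K <= k)%N -> a != ord0 -> inJ (chik k a)) ->
  ( ( eqJ (fadd (D ord0 chiu)
                (fscal 2 (fsumN (fun a => D a (fmul (uf a (unitmi ord0)) chip1)))))
          ((@fzero n))
    /\ (forall (k : nat) (a : 'I_n.+2), a != ord0 ->
          eqJ (fadd (D ord0 (chik k a))
              (fadd (if k == 0%N then D a chiu else (@fzero n))
              (fadd (if k is k'.+1 then chik k' a else (@fzero n))
                    (fscal 2
                      (fadd (if k == 0%N then
                               D a (fmul (fsumN (fun b => uf b (unitmi b))) chip1)
                             else (@fzero n))
                      (fadd (if k == 1%N then
                               fopp (fmul (uf ord0 (unitmi a)) chip1)
                             else (@fzero n))
                            (if k == 0%N then
                               fsumN (fun b => D b (fmul (uf b (unitmi a)) chip1))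
                             else (@fzero n))))))))
              ((@fzero n)))
    /\ eqJ (fsub (D ord0 chip0) (lap' chip1)) ((@fzero n))
    /\ eqJ (fadd (D ord0 chip1) chip0) ((@fzero n)) )
  <->
  ( (forall a : 'I_n.+2, a != ord0 ->
        eqJ (chik 0%N a) (fscal 2 (fmul (uf ord0 (unitmi a)) chip1)))
    /\ (forall (k : nat) (a : 'I_n.+2), (1 <= k)%N -> a != ord0 ->
        eqJ (chik k a) ((@fzero n)))
    /\ eqJ chip0 (fopp (D ord0 chip1))
    /\ eqJ (lap chip1) ((@fzero n))
    /\ (forall a : 'I_n.+2, a != ord0 ->
        eqJ (fsumM (fun mu =>
               fsub (fmul (uf mu (unitmi ord0)) (D mu (D a chip1)))
                    (fmul (uf mu (unitmi a)) (D mu (D ord0 chip1)))))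
            ((@fzero n)))
    /\ eqJ (D ord0 chiu)
           (fscal (-2) (fsumN (fun a => D a (fmul (uf a (unitmi ord0)) chip1))))
    /\ (forall a : 'I_n.+2, a != ord0 ->
        eqJ (D a chiu)
            (fscal (-2)
               (fadd (fsumM (fun mu => fmul (uf mu (unitmi a)) (D mu chip1)))
                     (D a (fmul (fsumN (fun b => uf b (unitmi b))) chip1)))))) ).
Proof.
move=> Hu Hk Hp0 Hp1 [K HK].
have Z : forall f : F n, inJ f -> eqJ f (@fzero n).
  move=> f Jf; apply: (inJ_ext Jf) => y; rewrite /fsub /fzero; ring.
have Z' : forall f : F n, eqJ f (@fzero n) -> inJ f.
  move=> f Jf; apply: (inJ_ext Jf) => y; rewrite /fsub /fzero; ring.
have HD4 : D ord0 (fsub (fadd (D ord0 chip1) chip0) (@fzero n)) =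
           fsub (fadd (D ord0 (D ord0 chip1)) (D ord0 chip0)) (@fzero n).
  rewrite D_sub; try by ab.
  by rewrite D_add ?D_fzero; try by ab.
have HD3 : D ord0 (fsub chip0 (fopp (D ord0 chip1))) =
           fsub (D ord0 chip0) (fopp (D ord0 (D ord0 chip1))).
  rewrite D_sub; try by ab.
  by rewrite D_opp; try by ab.
have Elap : forall y, lap chip1 y = D ord0 (D ord0 chip1) y + lap' chip1 y.
  move=> y; by rewrite /lap /lap' fsumM_pt fsumN_pt.
have HC1 : forall a : 'I_n.+2, a != ord0 ->
   D ord0 (fsub (chik 0%N a) (fscal 2 (fmul (uf ord0 (unitmi a)) chip1))) =
   fsub (D ord0 (chik 0%N a)) (fscal 2 (fun y => uf ord0 (addmi (unitmi a) ord0) y * chip1 y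
                                              + uf ord0 (unitmi a) y * D ord0 chip1 y)).
  move=> a Ha; have Hka := Hk 0%N a Ha.
  rewrite D_sub; try by ab.
  rewrite D_scal; try by ab.
  by rewrite D_mul ?D_uf; try by ab.
split.
- move=> [H1 [H2 [H3 H4]]].
  have C2 : forall k a, (1 <= k)%N -> a != ord0 -> inJ (chik k a).
    suff H : forall d k a, (K <= k + d)%N -> (1 <= k)%N -> a != ord0 -> inJ (chik k a).
      move=> k a Hk1 Ha; apply: (H K) => //; exact: leq_addl.
    elim=> [|d IH] k a Hkd Hk1 Ha.
      apply: HK => //; by rewrite addn0 in Hkd.
    have Hk2 : inJ (chik k.+1 a) by apply: IH => //; by rewrite addSnnS.
    case: k Hk1 Hkd Hk2 => [//|k] _ _ Hk2.
    have := H2 k.+2 a Ha; rewrite /= => E.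
    apply: (inJ_c3 (ka := 1) (kb := -1) (kc := 0) E (inJ_D ord0 Hk2) (inJ0 n)) => y.
    rewrite /fsub /fadd /fscal /fzero; ring.
  have C1 : forall a : 'I_n.+2, a != ord0 ->
      eqJ (chik 0%N a) (fscal 2 (fmul (uf ord0 (unitmi a)) chip1)).
    move=> a Ha; have := H2 1%N a Ha; rewrite /= => E.
    apply: (inJ_c3 (ka := 1) (kb := -1) (kc := 0) E (inJ_D ord0 (C2 1%N a (leqnn 1) Ha)) (inJ0 n)) => y.
    rewrite /fsub /fadd /fscal /fzero /fopp /fmul; ring.
  have C6 : eqJ (D ord0 chiu)
           (fscal (-2) (fsumN (fun a => D a (fmul (uf a (unitmi ord0)) chip1)))).
    apply: (inJ_ext H1) => y; rewrite /fsub /fadd /fscal /fzero; ring.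
  have C7 : forall a : 'I_n.+2, a != ord0 ->
        eqJ (D a chiu)
            (fscal (-2)
               (fadd (fsumM (fun mu => fmul (uf mu (unitmi a)) (D mu chip1)))
                     (D a (fmul (fsumN (fun b => uf b (unitmi b))) chip1)))).
    move=> a Ha; have := H2 0%N a Ha; rewrite /= => E.
    apply: (inJ_sum3 (ha := fun _ => 1) (hb := fun _ => -1) (hc := fscal (-2) chip1)
             (AB_const _) (AB_const _) (AB_fscal _ Hp1) E (inJ_D ord0 (C1 a Ha)) (inJ_gen true (unitmi a))) => y.
    rewrite (core7 a Hu (Hk 0%N a Ha) Hp1 y) /fscal /=; ring.
  split => //; split; first by move=> k a Hk1 Ha; apply: Z; exact: C2.
  split; first by apply: (inJ_ext H4) => y; rewrite /fsub /fadd /fopp /fzero; ring.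
  split.
    have := inJ_D ord0 H4; rewrite HD4 => E.
    apply: (inJ_c3 (ka := 1) (kb := -1) (kc := 0) E H3 (inJ0 n)) => y.
    rewrite /fsub /fadd /fzero Elap; ring.
  split.
    move=> a Ha.
    apply: (inJ_sum4 (ha := fun _ => /2) (hb := fun _ => - /2) (hc := D ord0 chip1)
             (hd := D ord0 (D a chip1)) (AB_const _) (AB_const _) (AB_D _ Hp1) (AB_D _ (AB_D _ Hp1))
             (inJ_D a C6) (inJ_D ord0 (C7 a Ha)) (inJ_gen true (unitmi a)) (inJ_gen true (@mi0 n))) => y.
    rewrite (core5 a Hu Hp1 y) /=; ring.
  by split.
- move=> [C1 [C2 [C3 [C4 [C5 [C6 C7]]]]]].
  split; first by apply: (inJ_ext C6) => y; rewrite /fsub /fadd /fscal /fzero; ring.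
  split.
    move=> [|[|k]] a Ha /=.
    + apply: (inJ_sum3 (ha := fun _ => 1) (hb := fun _ => 1) (hc := fscal 2 chip1)
             (AB_const _) (AB_const _) (AB_fscal _ Hp1) (C7 a Ha) (inJ_D ord0 (C1 a Ha)) (inJ_gen true (unitmi a))) => y.
      have := core7 a Hu (Hk 0%N a Ha) Hp1 y; rewrite /fscal /= => ->; ring.
    + apply: (inJ_c3 (ka := 1) (kb := 1) (kc := 0) (inJ_D ord0 (Z' _ (C2 1%N a (leqnn 1) Ha))) (C1 a Ha) (inJ0 n)) => y.
      rewrite /fsub /fadd /fscal /fzero /fopp /fmul; ring.
    + apply: (inJ_c3 (ka := 1) (kb := 1) (kc := 0) (inJ_D ord0 (Z' _ (C2 k.+2 a erefl Ha))) (Z' _ (C2 k.+1 a erefl Ha)) (inJ0 n)) => y.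
      rewrite /fsub /fadd /fscal /fzero; ring.
  split.
    have := inJ_D ord0 C3; rewrite HD3 => E.
    apply: (inJ_c3 (ka := 1) (kb := -1) (kc := 0) E C4 (inJ0 n)) => y.
    rewrite /fsub /fadd /fzero /fopp Elap; ring.
  by apply: (inJ_ext C3) => y; rewrite /fsub /fadd /fopp /fzero; ring.
Qed.
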